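(* (1) Any voting method satisfying positive involvement and the Condorcet winner criterion refines the defensible set for linear profiles, i.e. $F(\mathbf{P})\subseteq D(\mathbf{P})$ for every linear profile $\mathbf{P}$. (2) Any voting method satisfying positive involvement and the weak Condorcet winner criterion refines the defensible set for all profiles, i.e. $F(\mathbf{P})\subseteq D(\mathbf{P})$ for every profile $\mathbf{P}$.
   Context: Fix infinite sets $\mathcal{X}$ (alternatives) and $\mathcal{V}$ (voters). A profile $\mathbf{P}$ is a function from a nonempty finite set $V(\mathbf{P})\subseteq\mathcal{V}$ to the set of strict weak orders on a nonempty finite set $X(\mathbf{P})\subseteq\mathcal{X}$; $(x,y)\in\mathbf{P}(i)$ means voter $i$ strictly prefers $x$ to $y$. $\mathbf{P}$ is linear if every $\mathbf{P}(i)$ is a linear order. $\mathrm{Support}_\mathbf{P}(a,b)=|\{i\in V(\mathbf{P}) : (a,b)\in\mathbf{P}(i)\}|$ and $\mathrm{Margin}_\mathbf{P}(x,y)=\mathrm{Support}_\mathbf{P}(x,y)-\mathrm{Support}_\mathbf{P}(y,x)$. A voting method is a function $F$ assigning to each profile $\mathbf{P}$ a nonempty $F(\mathbf{P})\subseteq X(\mathbf{P})$. Defensible set: $D(\mathbf{P})=\{x\in X(\mathbf{P}) : \text{for all } y\in X(\mathbf{P}) \text{ there is } z\in X(\mathbf{P}) \text{ with } \mathrm{Margin}_\mathbf{P}(z,y)\geq\mathrm{Margin}_\mathbf{P}(y,x)\}$. Positive involvement: if $x\in F(\mathbf{P})$ and $\mathbf{P}'$ is obtained from $\mathbf{P}$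 by adding one new voter who ranks $x$ uniquely first, then $x\in F(\mathbf{P}')$. Condorcet winner criterion: if $x$ is a Condorcet winner of $\mathbf{P}$ ($\mathrm{Margin}_\mathbf{P}(x,y)>0$ for all $y\neq x$) then $F(\mathbf{P})=\{x\}$. Weak Condorcet winner criterion: if $\mathbf{P}$ has a weak Condorcet winner (an $x$ with $\mathrm{Margin}_\mathbf{P}(x,y)\geq 0$ for all $y\neq x$), then every element of $F(\mathbf{P})$ is a weak Condorcet winner. *)

(* Defs.v *)
From HB Require Import structures.
From mathcomp Require Import all_boot all_algebra.
From mathcomp Require Import finmap.
Set Implicit Arguments. Unset Strict Implicit. Unset Printing Implicit Defensive.
Local Open Scope fset_scope.
Local Open Scope fmap_scope.

Section Voting.
Variables (X V : choiceType).

(* A strict weak order on the finite set A, given as its graph: a set of pairs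
   (a,b) meaning "a strictly preferred to b". *)
Definition strict_weak_order (A : {fset X}) (R : {fset (X * X)}) : Prop :=
  [/\ (forall a b, (a, b) \in R -> a \in A /\ b \in A),
      (forall a, (a, a) \notin R),
      (forall a b c, a \in A -> b \in A -> c \in A ->
          (a, b) \in R -> (b, c) \in R -> (a, c) \in R) &
      (forall a b c, a \in A -> b \in A -> c \in A ->
          (a, c) \in R -> (a, b) \in R \/ (b, c) \in R)].

Definition linear_order (A : {fset X}) (R : {fset (X * X)}) : Prop :=
  strict_weak_order A R /\
  (forall a b, a \in A -> b \in A -> a != b -> (a, b) \in R \/ (b, a) \in R).

Record profile := Profile {
  alts : {fset X};
  ballots : {fmap V -> {fset (X * X)}};
  alts_nonempty : alts != fset0;
  voters_nonempty : domf ballots != fset0;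
  ballots_swo : forall i r, ballots.[? i] = Some r -> strict_weak_order alts r
}.

Definition voters (P : profile) : {fset V} := domf (ballots P).

Definition ballot (P : profile) (i : V) : {fset (X * X)} :=
  odflt fset0 (ballots P).[? i].

Definition linear_profile (P : profile) : Prop :=
  forall i, i \in voters P -> linear_order (alts P) (ballot P i).

Definition support (P : profile) (a b : X) : nat :=
  count (fun i => (a, b) \in ballot P i) (voters P).

Definition margin (P : profile) (a b : X) : int :=
  (support P a b)%:Z - (support P b a)%:Z.

Definition defensible (P : profile) (x : X) : Prop :=
  x \in alts P /\
  forall y, y \in alts P ->
    exists2 z, z \in alts P & (margin P y x <= margin P z y)%R.

Definition voting_method (F : profile -> {fset X}) : Prop :=
  forall P, F P `<=` alts P /\ F P != fset0.

Definition adds_voter_ranking_first (P P' : profile) (i : V) (x : X) : Prop :=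
  [/\ i \notin voters P,
      alts P' = alts P,
      ballots P' = (ballots P).[i <- ballot P' i] &
      (forall y, y \in alts P -> y != x -> (x, y) \in ballot P' i)].

Definition positive_involvement (F : profile -> {fset X}) : Prop :=
  forall P P' i x, x \in F P -> adds_voter_ranking_first P P' i x -> x \in F P'.

Definition condorcet_winner (P : profile) (x : X) : Prop :=
  x \in alts P /\ forall y, y \in alts P -> y != x -> (0 < margin P x y)%R.

Definition weak_condorcet_winner (P : profile) (x : X) : Prop :=
  x \in alts P /\ forall y, y \in alts P -> y != x -> (0 <= margin P x y)%R.

Definition condorcet_winner_criterion (F : profile -> {fset X}) : Prop :=
  forall P x, condorcet_winner P x -> F P = [fset x].

Definition weak_condorcet_winner_criterion (F : profile -> {fset X}) : Prop :=
  forall P, (exists x, weak_condorcet_winner P x) ->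
    forall y, y \in F P -> weak_condorcet_winner P y.

End Voting.

Definition infinite_type (T : choiceType) : Prop :=
  forall s : {fset T}, exists t, t \notin s.

(* Main.v *)
Require Import Defs.
From mathcomp Require Import all_boot all_order all_algebra.
From mathcomp Require Import finmap.
Local Open Scope fset_scope.
Import Order.TTheory GRing.Theory Num.Theory.
Set Implicit Arguments. Unset Strict Implicit.

Section H.
Variables (X V : choiceType).

Definition rk (x y : X) (a : X) : nat := if a == x then 0 else if a == y then 1 else 2.

Definition bal (A : {fset X}) (x y : X) : {fset (X * X)} :=
  [fset p in A `*` A | rk x y p.1 < rk x y p.2].

Lemma in_bal A x y a b : ((a, b) \in bal A x y) = [&& a \in A, b \in A & rk x y a < rk x y b].
Proof. by rewrite /bal !inE /= andbA. Qed.

Lemma bal_swo A x y : strict_weak_order A (bal A x y).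
Proof.
split.
- by move=> a b; rewrite in_bal => /and3P[].
- by move=> a; rewrite in_bal ltnn !andbF.
- move=> a b c aA bA cA; rewrite !in_bal aA bA cA /= => h1 h2; exact: ltn_trans h1 h2.
- move=> a b c aA bA cA; rewrite !in_bal aA bA cA /= => h.
  by case: (ltnP (rk x y a) (rk x y b)) => h'; [left|right; apply: leq_ltn_trans h].
Qed.

Definition addv (P : profile X V) (i : V) (x y : X) : profile X V.
refine (@Profile X V (alts P) ((ballots P).[i <- bal (alts P) x y])%fmap (alts_nonempty P) _ _).
- by apply/fset0Pn; exists i; rewrite dom_setf fset1U1.
- move=> j r; rewrite fnd_set; case: eqP => _.
  + by case=> <-; exact: bal_swo.
  + exact: ballots_swo.
Defined.

Lemma ballot_addv P i x y j : ballot (addv P i x y) j = if j == i then bal (alts P) x y else ballot P j.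
Proof. by rewrite /ballot /= fnd_set; case: eqP. Qed.

Lemma support_addv P i x y a b : i \notin voters P ->
  Defs.support (addv P i x y) a b = (((a, b) \in bal (alts P) x y) + Defs.support P a b)%N.
Proof.
move=> iP; rewrite /Defs.support /voters /=.
have pe : perm_eq (enum_fset (domf ((ballots P).[i <- bal (alts P) x y])%fmap)) (i :: enum_fset (domf (ballots P))).
  apply: uniq_perm; first exact: fset_uniq.
    by rewrite /= fset_uniq andbT.
  by move=> j; rewrite dom_setf in_fset1U inE.
rewrite (permP pe) /= ballot_addv eqxx; apply/eqP; rewrite eqn_add2l; apply/eqP.
apply: eq_in_count => j jP /=; rewrite ballot_addv; case: eqP => // ji.
by move: iP; rewrite -ji /voters jP.
Qed.

Lemma adds_addv P i x y : i \notin voters P -> x \in alts P ->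
  adds_voter_ranking_first P (addv P i x y) i x.
Proof.
move=> iP xA; split => //.
- by rewrite /= ballot_addv eqxx.
- move=> z zA zx; rewrite ballot_addv eqxx in_bal xA zA /rk eqxx /=.
  by rewrite (negPf zx); case: ifP.
Qed.

Lemma iter_add (F : profile X V -> {fset X}) (HV : infinite_type V) :
  positive_involvement F -> forall P x y, x \in alts P -> x \in F P ->
  forall k : nat, exists P', [/\ alts P' = alts P, x \in F P' &
     forall a b, Defs.support P' a b = (k * ((a, b) \in bal (alts P) x y) + Defs.support P a b)%N].
Proof.
move=> PI P x y xA xF; elim=> [|k [P' [e1 e2 e3]]].
  by exists P; split => // a b; rewrite mul0n.
have [i iP] := HV (voters P').
exists (addv P' i x y); split => //.
- by apply: (PI _ _ i x e2); apply: adds_addv; rewrite // e1.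
- by move=> a b; rewrite support_addv // e1 e3 mulSn addnA.
Qed.


Lemma margin_aa (P : profile X V) a : margin P a a = 0%R.
Proof. by rewrite /margin subrr. Qed.

Lemma margin_anti (P : profile X V) a b : margin P a b = (- margin P b a)%R.
Proof. by rewrite /margin opprB. Qed.

Lemma sum_lin (P : profile X V) a b : linear_profile P -> a \in alts P -> b \in alts P -> a != b ->
  (Defs.support P a b + Defs.support P b a = size (voters P))%N.
Proof.
move=> HL aA bA ab; rewrite /Defs.support -count_predUI.
have -> : count (predI (fun i => (a, b) \in ballot P i) (fun i => (b, a) \in ballot P i)) (voters P) = 0%N.
  rewrite (@eq_in_count _ _ pred0) ?count_pred0 // => j jP /=.
  have [[h1 h2 h3 h4] h5] := HL j jP.
  apply/negP => /andP[u v]; by move: (h2 a); rewrite (h3 a b a aA bA aA u v).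
rewrite addn0 (@eq_in_count _ _ predT) ?count_predT // => j jP /=.
have [[h1 h2 h3 h4] h5] := HL j jP.
by case: (h5 a b aA bA ab) => ->; rewrite ?orbT.
Qed.

End H.

From mathcomp Require Import zify.
From Stdlib Require Import Classical.

Lemma margin_iter (X V : choiceType) (P P' : profile X V) A x y k
  (e3 : forall a b, Defs.support P' a b = (k * ((a, b) \in bal A x y) + Defs.support P a b)%N) a b :
  margin P' a b = (margin P a b + k%:Z * (((a, b) \in bal A x y)%:Z - ((b, a) \in bal A x y)%:Z))%R.
Proof. rewrite /margin !e3. lia. Qed.

Theorem lemma1 (X V : choiceType) (HX : infinite_type X) (HV : infinite_type V) :
  (forall F : profile X V -> {fset X},
     voting_method F -> positive_involvement F -> condorcet_winner_criterion F ->
     forall P, linear_profile P -> forall x, x \in F P -> defensible P x)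
  /\
  (forall F : profile X V -> {fset X},
     voting_method F -> positive_involvement F -> weak_condorcet_winner_criterion F ->
     forall P, forall x, x \in F P -> defensible P x).
Proof.
split.
- move=> F VM PI CW P HL x xF.
  have xA : x \in alts P by have [/fsubsetP h _] := VM P; exact: h.
  split => // y yA; apply: NNPP => H.
  have Hz : forall z, z \in alts P -> (margin P z y < margin P y x)%R.
    move=> z zA; rewrite ltNge; apply/negP => h; apply: H; by exists z.
  have m0 := Hz y yA; rewrite margin_aa in m0.
  have yx : y != x by apply/eqP => e; move: m0; rewrite e margin_aa.
  have Hz2 : forall z, z \in alts P -> z != y -> (margin P z y <= margin P y x - 2)%R.
    move=> z zA zy; have := Hz z zA; rewrite /margin.
    have := sum_lin HL zA yA zy; have := sum_lin HL yA xA yx. lia.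
  have [P' [e1 e2 e3]] := iter_add HV PI y xA xF `|(margin P y x - 1)%R|%N.
  have dxy : (x, y) \in bal (alts P) x y by rewrite in_bal xA yA /rk eqxx (negPf yx) eqxx.
  have dyx : ((y, x) \in bal (alts P) x y) = false by rewrite in_bal /rk eqxx (negPf yx) eqxx !andbF.
  have cw : condorcet_winner P' y.
    split; first by rewrite e1.
    move=> z; rewrite e1 => zA zy; rewrite (margin_iter e3).
    case: (eqVneq z x) => [->|zx].
      rewrite dxy dyx. lia.
    have d1 : (y, z) \in bal (alts P) x y by rewrite in_bal yA zA /rk eqxx (negPf yx) (negPf zx) (negPf zy).
    have d2 : ((z, y) \in bal (alts P) x y) = false by rewrite in_bal /rk eqxx (negPf zx) (negPf zy) (negPf yx) !andbF.
    rewrite d1 d2 margin_anti; have := Hz2 z zA zy. lia.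
  have := CW _ _ cw; move: e2 => /[swap] -> /fset1P e.
  by move: yx; rewrite e eqxx.
- move=> F VM PI WCW P x xF.
  have xA : x \in alts P by have [/fsubsetP h _] := VM P; exact: h.
  split => // y yA; apply: NNPP => H.
  have Hz : forall z, z \in alts P -> (margin P z y < margin P y x)%R.
    move=> z zA; rewrite ltNge; apply/negP => h; apply: H; by exists z.
  have m0 := Hz y yA; rewrite margin_aa in m0.
  have yx : y != x by apply/eqP => e; move: m0; rewrite e margin_aa.
  have [P' [e1 e2 e3]] := iter_add HV PI y xA xF `|(margin P y x - 1)%R|%N.
  have dxy : (x, y) \in bal (alts P) x y by rewrite in_bal xA yA /rk eqxx (negPf yx) eqxx.
  have dyx : ((y, x) \in bal (alts P) x y) = false by rewrite in_bal /rk eqxx (negPf yx) eqxx !andbF.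
  have cw : weak_condorcet_winner P' y.
    split; first by rewrite e1.
    move=> z; rewrite e1 => zA zy; rewrite (margin_iter e3).
    case: (eqVneq z x) => [->|zx].
      rewrite dxy dyx. lia.
    have d1 : (y, z) \in bal (alts P) x y by rewrite in_bal yA zA /rk eqxx (negPf yx) (negPf zx) (negPf zy).
    have d2 : ((z, y) \in bal (alts P) x y) = false by rewrite in_bal /rk eqxx (negPf zx) (negPf zy) (negPf yx) !andbF.
    rewrite d1 d2 margin_anti; have := Hz z zA. lia.
  have [_ /(_ y)] := WCW _ (ex_intro _ y cw) x e2.
  have xy : x != y by rewrite eq_sym.
  rewrite e1 => /(_ yA) /(_ yx).
  rewrite (margin_iter e3) dxy dyx (margin_anti P x y). lia.
Qed.
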